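(* Let $0<d<\pi/2$, $\mathscr{D}_d=\{\zeta\in\mathbb{C}:|\Im\zeta|<d\}$, $\mathscr{D}_d^{-}=\{\zeta\in\mathscr{D}_d:\Re\zeta<0\}$, $\mathscr{D}_d^{+}=\{\zeta\in\mathscr{D}_d:\Re\zeta\ge0\}$, and $\psi(t)=\sinh[(\pi/2)\sinh t]$. Assume $f$ is analytic on $\psi(\mathscr{D}_d)$ and there are constants $K,\alpha,\beta>0$ with $|f(z)|\le K|1+z^2|^{-(\alpha+1)/2}$ for $z\in\psi(\mathscr{D}_d^-)$ and $|f(z)|\le K|1+z^2|^{-(\beta+1)/2}$ for $z\in\psi(\mathscr{D}_d^+)$. Let $\mu=\min\{\alpha,\beta\}$, $\nu=\max\{\alpha,\beta\}$. Then $F(\zeta)=f(\psi(\zeta))\psi'(\zeta)$ belongs to $\mathbf{L}^{\mathrm{DE}}_{L,R,\alpha,\beta}(\mathscr{D}_d)$ with $L=2^{\nu}K/\{\cos(\frac\pi2\sin d)\}^{(\nu-\mu)/2}$ and $R=2^{\nu}K$.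
   Context: For positive $L,R,\alpha,\beta$ and $0<d<\pi/2$, $\mathbf{L}^{\mathrm{DE}}_{L,R,\alpha,\beta}(\mathscr{D}_d)$ is the set of functions $F$ analytic on $\mathscr{D}_d$ such that for all $\zeta\in\mathscr{D}_d$, $|F(\zeta)|\le\frac{(\pi/2)L|\cosh\zeta|}{|1+e^{-\pi\sinh\zeta}|^{\alpha/2}|1+e^{\pi\sinh\zeta}|^{\beta/2}}$, and for all $x\in\mathbb{R}$, $|F(x)|\le\frac{(\pi/2)R\cosh x}{(1+e^{-\pi\sinh x})^{\alpha/2}(1+e^{\pi\sinh x})^{\beta/2}}$. *)

(* Defs.v *)
From Stdlib Require Import Reals.
From Coquelicot Require Import Coquelicot.
Open Scope R_scope.

Definition Cexp (z : C) : C :=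
  (exp (Re z) * cos (Im z), exp (Re z) * sin (Im z)).
Definition Csinh (z : C) : C := ((Cexp z - Cexp (- z)) / 2)%C.
Definition Ccosh (z : C) : C := ((Cexp z + Cexp (- z)) / 2)%C.

Definition strip (d : R) (z : C) : Prop := Rabs (Im z) < d.

Definition analytic_on (S : C -> Prop) (F : C -> C) : Prop :=
  forall z, S z -> @ex_derive C_AbsRing C_NormedModule F z.

Definition psi (t : C) : C := Csinh (RtoC (PI / 2) * Csinh t)%C.
(* its derivative psi'(t) = (pi/2) cosh t cosh((pi/2) sinh t) *)
Definition dpsi (t : C) : C :=
  (RtoC (PI / 2) * Ccosh t * Ccosh (RtoC (PI / 2) * Csinh t))%C.

Definition LDE (L Rr alpha beta d : R) (F : C -> C) : Prop :=
  analytic_on (strip d) F /\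
  (forall z : C, strip d z ->
     Cmod (F z) <=
       (PI / 2) * L * Cmod (Ccosh z) /
       (Rpower (Cmod (1 + Cexp (RtoC (- PI) * Csinh z)))%C (alpha / 2) *
        Rpower (Cmod (1 + Cexp (RtoC PI * Csinh z)))%C (beta / 2))) /\
  (forall x : R,
     Cmod (F (RtoC x)) <=
       (PI / 2) * Rr * cosh x /
       (Rpower (1 + exp (- PI * sinh x)) (alpha / 2) *
        Rpower (1 + exp (PI * sinh x)) (beta / 2))).

(* Main.v *)
Require Import Defs.
From Stdlib Require Import Reals Lra Psatz Machin.
From Coquelicot Require Import Coquelicot.
Open Scope R_scope.


Lemma PI_bounds : 3.14 < PI < 3.15.
Proof.
  destruct (PI_2_3_7_ineq 2) as [H1 H2].
  unfold sum_f_R0, tg_alt, PI_2_3_7_tg, Ratan_seq in H1, H2. simpl in H1, H2.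
  lra.
Qed.

Lemma Cexp_add a b : Cexp (a + b) = (Cexp a * Cexp b)%C.
Proof.
  destruct a as [x y], b as [u v]; unfold Cexp; simpl.
  rewrite exp_plus, cos_plus, sin_plus.
  unfold Cmult; simpl. f_equal; ring.
Qed.

Lemma Cexp_0 : Cexp 0 = 1%C.
Proof. unfold Cexp; simpl. rewrite exp_0, cos_0, sin_0. apply injective_projections; simpl; ring. Qed.

Lemma Cexp_opp z : (Cexp z * Cexp (- z) = 1)%C.
Proof. rewrite <- Cexp_add. replace (z + - z)%C with (RtoC 0) by ring. apply Cexp_0. Qed.

Lemma Cmod_Cexp z : Cmod (Cexp z) = exp (Re z).
Proof.
  destruct z as [x y]; unfold Cmod, Cexp, Re, Im; cbn [fst snd].
  replace ((exp x * cos y) ^ 2 + (exp x * sin y) ^ 2)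
    with (exp x ^ 2) by (pose proof (sin2_cos2 y); unfold Rsqr in *; nra).
  rewrite sqrt_pow2; auto. left; apply exp_pos.
Qed.

Lemma Cmod_le_sum (p : C) : Cmod p <= Rabs (fst p) + Rabs (snd p).
Proof.
  destruct p as [x y]; unfold Cmod; simpl.
  rewrite <- (sqrt_pow2 (Rabs x + Rabs y)) by (pose proof (Rabs_pos x); pose proof (Rabs_pos y); lra).
  apply sqrt_le_1_alt.
  pose proof (Rabs_pos x); pose proof (Rabs_pos y).
  pose proof (pow2_abs x); pose proof (pow2_abs y); simpl in *.
  nra.
Qed.

Lemma Rabs_le_inv a b : Rabs a <= b -> - b <= a <= b.
Proof. unfold Rabs; destruct Rcase_abs; lra. Qed.

Lemma exp_taylor1 a : Rabs a <= 1/2 -> Rabs (exp a - 1 - a) <= 2 * a ^ 2.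
Proof.
  intros Ha. pose proof (exp_ineq1_le a). pose proof (exp_ineq1_le (-a)).
  assert (E : exp a * exp (-a) = 1) by (rewrite <- exp_plus; replace (a + -a) with 0 by ring; apply exp_0).
  pose proof (exp_pos a). apply Rabs_le_inv in Ha as [Ha1 Ha2].
  assert (exp a * (1 - a) <= 1) by nra.
  apply Rabs_le; split; nra.
Qed.

Lemma cos_taylor b : Rabs b <= 1/2 -> 0 <= 1 - cos b <= b ^ 2 / 2.
Proof.
  intros Hb. apply Rabs_le_inv in Hb as [Hb1 Hb2].
  pose proof PI_bounds.
  destruct (cos_bound b 0) as [H1 H2]; try lra.
  unfold cos_approx, cos_term in H1, H2; simpl in H1, H2.
  split.
  - pose proof (COS_bound b); lra.
  - unfold Rdiv in *. simpl in *. nra.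
Qed.

Lemma sin_taylor_pos b : 0 <= b <= 1/2 -> 0 <= b - sin b <= b ^ 3 / 6.
Proof.
  intros Hb. pose proof PI_bounds.
  destruct (sin_bound b 0) as [H1 H2]; try lra.
  unfold sin_approx, sin_term in H1, H2; simpl in H1, H2.
  destruct (Req_dec b 0) as [->|Hn]. rewrite sin_0; lra.
  pose proof (sin_lt_x b ltac:(lra)). split. lra.
  unfold Rdiv in *; simpl in *. nra.
Qed.

Lemma sin_taylor b : Rabs b <= 1/2 -> Rabs (sin b - b) <= b ^ 2 /\ Rabs (sin b) <= Rabs b.
Proof.
  intros Hb. apply Rabs_le_inv in Hb as [Hb1 Hb2].
  destruct (Rle_dec 0 b).
  - destruct (sin_taylor_pos b) as [A B]; [lra|].
    rewrite (Rabs_pos_eq b) by lra.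
    split; apply Rabs_le; split; try nra.
  - destruct (sin_taylor_pos (-b)) as [A B]; [lra|].
    rewrite sin_neg in A, B.
    rewrite (Rabs_left b) by lra.
    split; apply Rabs_le; split; try nra.
Qed.

Lemma Cexp_taylor (h : C) : Cmod h <= 1/2 -> Cmod (Cexp h - 1 - h)%C <= 5 * Cmod h ^ 2.
Proof.
  intros Hh. destruct h as [a b].
  assert (Ha : Rabs a <= Cmod (a,b)) by apply (re_le_Cmod (a,b)).
  assert (Hb : Rabs b <= Cmod (a,b)) by (eapply Rle_trans; [apply Rmax_r|apply (Rmax_Cmod (a,b))]).
  rewrite Cmod2_alt. simpl Re; simpl Im.
  eapply Rle_trans; [apply Cmod_le_sum|].
  unfold Cexp; simpl.
  assert (Ha' : Rabs a <= 1/2) by lra. assert (Hb' : Rabs b <= 1/2) by lra.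
  pose proof (exp_taylor1 a Ha'). pose proof (cos_taylor b Hb').
  destruct (sin_taylor b Hb') as [S1 S2].
  match goal with |- Rabs ?X + Rabs ?Y <= _ =>
    replace X with ((exp a - 1 - a) * cos b + (1 + a) * (cos b - 1)) by ring;
    replace Y with ((exp a - 1 - a) * sin b + a * sin b + (sin b - b)) by ring end.
  pose proof (COS_bound b). pose proof (SIN_bound b).
  apply Rabs_le_inv in Ha'.
  assert (R1 : Rabs ((exp a - 1 - a) * cos b + (1 + a) * (cos b - 1)) <= 2 * a^2 + 3/4 * b^2).
  { eapply Rle_trans; [apply Rabs_triang|]. rewrite !Rabs_mult.
    assert (Rabs (cos b) <= 1) by (apply Rabs_le; lra).
    rewrite (Rabs_pos_eq (1+a)) by lra. rewrite (Rabs_left1 (cos b - 1)) by lra.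
    pose proof (Rabs_pos (exp a - 1 - a)). nra. }
  assert (R2 : Rabs ((exp a - 1 - a) * sin b + a * sin b + (sin b - b)) <= 2 * a^2 + (a^2 + b^2) + b^2).
  { eapply Rle_trans; [apply Rabs_triang|].
    eapply Rle_trans; [apply Rplus_le_compat_r; apply Rabs_triang|]. rewrite !Rabs_mult.
    assert (Rabs (sin b) <= 1) by (apply Rabs_le; lra).
    pose proof (Rabs_pos (exp a - 1 - a)). pose proof (Rabs_pos a). pose proof (Rabs_pos b).
    assert (Rabs a * Rabs b <= a^2 + b^2).
    { rewrite <- (pow2_abs a), <- (pow2_abs b). nra. }
    pose proof (Rabs_pos (sin b)). nra. }
  simpl. nra.
Qed.


Lemma Cexp_domin (z y : C) (eps : R) : 0 < eps ->
  Cmod (y - z) < Rmin (1/2) (eps / (5 * (Cmod (Cexp z) + 1))) ->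
  Cmod (Cexp y - Cexp z - (y - z) * Cexp z)%C <= eps * Cmod (y - z)%C.
Proof.
  intros Heps Hy.
  assert (HM : 0 < 5 * (Cmod (Cexp z) + 1)) by (pose proof (Cmod_ge_0 (Cexp z)); lra).
  set (h := (y - z)%C) in *.
  assert (Ey : y = (z + h)%C) by (unfold h; ring).
  rewrite Ey, Cexp_add.
  replace (Cexp z * Cexp h - Cexp z - h * Cexp z)%C with (Cexp z * (Cexp h - 1 - h))%C by ring.
  rewrite Cmod_mult.
  assert (Hh1 : Cmod h <= 1/2) by (pose proof (Rmin_l (1/2) (eps / (5 * (Cmod (Cexp z) + 1)))); lra).
  assert (Hh2 : Cmod h <= eps / (5 * (Cmod (Cexp z) + 1))) by (pose proof (Rmin_r (1/2) (eps / (5 * (Cmod (Cexp z) + 1)))); lra).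
  pose proof (Cexp_taylor h Hh1).
  pose proof (Cmod_ge_0 (Cexp z)). pose proof (Cmod_ge_0 h).
  apply Rmult_le_compat_r with (r := 5 * (Cmod (Cexp z) + 1)) in Hh2; [|lra].
  unfold Rdiv in Hh2. rewrite Rmult_assoc, Rinv_l, Rmult_1_r in Hh2 by lra.
  apply Rle_trans with (Cmod (Cexp z) * (5 * Cmod h ^ 2)).
  apply Rmult_le_compat_l; auto.
  simpl. nra.
Qed.

Lemma is_derive_Cexp z : @is_derive C_AbsRing C_NormedModule Cexp z (Cexp z).
Proof.
  unfold is_derive, filterdiff. split. apply is_linear_scal_l.
  intros x Hx. apply (@is_filter_lim_locally_unique C_AbsRing (AbsRing_NormedModule C_AbsRing)) in Hx. subst x.
  intros eps.
  assert (HM : 0 < 5 * (Cmod (Cexp z) + 1)) by (pose proof (Cmod_ge_0 (Cexp z)); lra).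
  assert (Hd : 0 < Rmin (1/2) (eps / (5 * (Cmod (Cexp z) + 1)))).
  { apply Rmin_glb_lt. lra. apply Rdiv_lt_0_compat; [apply cond_pos|lra]. }
  exists (mkposreal _ Hd). intros y Hy.
  apply (Cexp_domin z y eps (cond_pos eps) Hy).
Qed.


Lemma conv f z l : @is_derive C_AbsRing C_NormedModule f z l -> @is_derive C_AbsRing (AbsRing_NormedModule C_AbsRing) f z l.
Proof. intros [[H1 H2 [M [HM H3]]] H4]. split. split.
 - exact H1.
 - exact H2.
 - exists M. split. exact HM. exact H3.
 - exact H4.
Qed.
Lemma conv2 f z l : @is_derive C_AbsRing (AbsRing_NormedModule C_AbsRing) f z l -> @is_derive C_AbsRing C_NormedModule f z l.
Proof. intros [[H1 H2 [M [HM H3]]] H4]. split. split.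
 - exact H1.
 - exact H2.
 - exists M. split. exact HM. exact H3.
 - exact H4.
Qed.

Definition exC (f : C -> C) (z : C) := @ex_derive C_AbsRing C_NormedModule f z.

Lemma exC_mult f g z : exC f z -> exC g z -> exC (fun t => f t * g t)%C z.
Proof.
  intros [df Hf] [dg Hg]. eexists. apply conv2.
  apply (@is_derive_mult C_AbsRing f g z df dg (conv _ _ _ Hf) (conv _ _ _ Hg)). intros; apply Cmult_comm.
Qed.

Lemma exC_plus f g z : exC f z -> exC g z -> exC (fun t => f t + g t)%C z.
Proof. intros Hf Hg. apply (@ex_derive_plus C_AbsRing C_NormedModule f g z Hf Hg). Qed.

Lemma exC_opp f z : exC f z -> exC (fun t => - f t)%C z.
Proof. intros Hf. apply (@ex_derive_opp C_AbsRing C_NormedModule f z Hf). Qed.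

Lemma exC_const (a : C) z : exC (fun _ => a) z.
Proof. apply (@ex_derive_const C_AbsRing C_NormedModule). Qed.

Lemma exC_id z : exC (fun t => t) z.
Proof. destruct (@ex_derive_id C_AbsRing z) as [l H]. exists l. apply conv2, H. Qed.

Lemma exC_comp f g z : exC f (g z) -> exC g z -> exC (fun t => f (g t)) z.
Proof. intros Hf [l Hg]. apply (@ex_derive_comp C_AbsRing C_NormedModule f g z Hf). exists l. apply conv, Hg. Qed.

Lemma exC_Cexp f z : exC f z -> exC (fun t => Cexp (f t)) z.
Proof. intros Hf. apply exC_comp; auto. eexists; apply is_derive_Cexp. Qed.

Lemma exC_Csinh f z : exC f z -> exC (fun t => Csinh (f t)) z.
Proof.
  intros Hf. unfold Csinh, Cdiv, Cminus. apply exC_mult; [|apply exC_const].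
  apply exC_plus. apply exC_Cexp; auto. apply exC_opp, exC_Cexp, exC_opp; auto.
Qed.

Lemma exC_Ccosh f z : exC f z -> exC (fun t => Ccosh (f t)) z.
Proof.
  intros Hf. unfold Ccosh, Cdiv. apply exC_mult; [|apply exC_const].
  apply exC_plus. apply exC_Cexp; auto. apply exC_Cexp, exC_opp; auto.
Qed.

Lemma exC_psi z : exC psi z.
Proof.
  unfold psi. apply exC_Csinh. apply exC_mult. apply exC_const. apply exC_Csinh, exC_id.
Qed.

Lemma exC_dpsi z : exC dpsi z.
Proof.
  unfold dpsi. apply exC_mult. apply exC_mult. apply exC_const. apply exC_Ccosh, exC_id.
  apply exC_Ccosh. apply exC_mult. apply exC_const. apply exC_Csinh, exC_id.
Qed.

Lemma analytic_F d (f : C -> C) :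
  analytic_on (fun z => exists t, strip d t /\ z = psi t) f ->
  analytic_on (strip d) (fun t => (f (psi t) * dpsi t)%C).
Proof.
  intros Hf z Hz. apply exC_mult; [|apply exC_dpsi].
  apply exC_comp; [|apply exC_psi]. apply Hf. exists z; split; auto.
Qed.


Lemma Csinh_comp x y : Csinh (x, y) = (sinh x * cos y, cosh x * sin y).
Proof.
  unfold Csinh, Cexp, sinh, cosh. apply injective_projections; simpl;
  rewrite ?cos_neg, ?sin_neg; field.
Qed.

Lemma Ccosh_comp x y : Ccosh (x, y) = (cosh x * cos y, sinh x * sin y).
Proof.
  unfold Ccosh, Cexp, sinh, cosh. apply injective_projections; simpl;
  rewrite ?cos_neg, ?sin_neg; field.
Qed.

Lemma Csinh_sq w : (1 + Csinh w * Csinh w = Ccosh w * Ccosh w)%C.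
Proof.
  unfold Csinh, Ccosh. pose proof (Cexp_opp w) as H.
  set (E := Cexp w) in *. set (F := Cexp (-w)) in *.
  transitivity (E * F + ((E - F) / 2) * ((E - F) / 2))%C.
  rewrite H; ring. field.
Qed.

Lemma Cexp_1plus_opp p : Cmod (1 + Cexp (- p))%C = exp (- Re p) * Cmod (1 + Cexp p)%C.
Proof.
  pose proof (Cexp_opp p) as H.
  replace (1 + Cexp (-p))%C with (Cexp (-p) * (1 + Cexp p))%C.
  rewrite Cmod_mult, Cmod_Cexp. f_equal.
  transitivity (Cexp (-p) + Cexp p * Cexp (-p))%C. ring. rewrite H. ring.
Qed.

Lemma two_cosh_A w : (2 * Ccosh w = Cexp w * (1 + Cexp (- (w + w))))%C.
Proof.
  unfold Ccosh.
  pose proof (Cexp_opp w) as H.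
  replace (- (w + w))%C with (- w + - w)%C by ring. rewrite Cexp_add.
  transitivity (Cexp w + (Cexp w * Cexp (-w)) * Cexp (- w))%C.
  rewrite H. field. 
  ring.
Qed.

Lemma two_cosh_B w : (2 * Ccosh w = Cexp (- w) * (1 + Cexp (w + w)))%C.
Proof.
  unfold Ccosh.
  pose proof (Cexp_opp w) as H.
  transitivity (Cexp (-w) + (Cexp w * Cexp (-w)) * Cexp w)%C.
  rewrite H. field. 
  rewrite Cexp_add. ring.
Qed.

Lemma cosh_AB w : 4 * Cmod (Ccosh w) ^ 2 = Cmod (1 + Cexp (- (w + w)))%C * Cmod (1 + Cexp (w + w))%C.
Proof.
  assert (H2 : Cmod (RtoC 2) = 2) by (rewrite Cmod_R; apply Rabs_pos_eq; lra).
  assert (E1 : 2 * Cmod (Ccosh w) = Cmod (Cexp w) * Cmod (1 + Cexp (- (w + w)))%C).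
  { rewrite <- H2, <- !Cmod_mult. f_equal. apply two_cosh_A. }
  assert (E2 : 2 * Cmod (Ccosh w) = Cmod (Cexp (-w)) * Cmod (1 + Cexp (w + w))%C).
  { rewrite <- H2, <- !Cmod_mult. f_equal. apply two_cosh_B. }
  rewrite !Cmod_Cexp in *.
  assert (exp (Re w) * exp (Re (- w)) = 1).
  { rewrite <- exp_plus. replace (Re w + Re (-w)) with 0 by (destruct w; unfold Re; simpl; ring). apply exp_0. }
  transitivity ((2 * Cmod (Ccosh w)) * (2 * Cmod (Ccosh w))). simpl; ring.
  rewrite E1 at 1. rewrite E2.
  transitivity (exp (Re w) * exp (Re (- w)) * (Cmod (1 + Cexp (- (w + w))) * Cmod (1 + Cexp (w + w)))). ring.
  rewrite H. ring.
Qed.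


Lemma exp_le_mono x y : x <= y -> exp x <= exp y.
Proof. intros H. destruct (Req_dec x y) as [->|]; [lra|]. left; apply exp_increasing; lra. Qed.

Lemma hyp_facts x : cosh x ^ 2 - sinh x ^ 2 = 1 /\ 1 <= cosh x /\ (x <= 0 -> sinh x <= 0).
Proof.
  unfold cosh, sinh.
  assert (H : exp x * exp (-x) = 1) by (rewrite <- exp_plus; replace (x + -x) with 0 by ring; apply exp_0).
  pose proof (exp_pos x). pose proof (exp_pos (-x)).
  split; [|split].
  - replace (((exp x + exp (- x)) / 2) ^ 2 - ((exp x - exp (- x)) / 2) ^ 2) with (exp x * exp (-x)) by field. exact H.
  - assert (0 <= (exp x - 1)^2) by apply pow2_ge_0.
    assert (E2 : exp x * (exp x + exp (-x)) = exp x ^ 2 + 1) by (simpl; nra).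
    assert (2 <= exp x + exp (-x)).
    { apply Rmult_le_reg_l with (exp x); auto. nra. }
    lra.
  - intros Hx. assert (exp x <= exp (-x)) by (apply exp_le_mono; lra). lra.
Qed.

Lemma exp_T4 z : 0 <= z -> 1 + z + z^2/2 + z^3/6 + z^4/24 <= exp z.
Proof.
  intros Hz. pose proof (exp_ge_taylor z 4 Hz) as H.
  unfold sum_f_R0 in H. simpl in H. unfold Rdiv in *. simpl. lra.
Qed.

Lemma exp_T2 z : 0 <= z -> 1 + z + z^2/2 <= exp z.
Proof.
  intros Hz. pose proof (exp_T4 z Hz). assert (0 <= z^3/6 + z^4/24) by (simpl; nra). lra.
Qed.

Lemma regime2 (a ch S v : R) :
  0 < a < PI / 2 -> 1 <= ch -> 0 <= S -> ch ^ 2 - S ^ 2 = 1 -> 0 < v ->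
  PI ^ 2 * v ^ 2 = PI ^ 2 - 4 * a ^ 2 ->
  PI / 4 + a / 2 < a * ch ->
  exp (- (PI * v * S)) <= 1 - cos a.
Proof.
  intros Ha Hch HS Hcs Hv Hv2 Hy.
  pose proof PI_bounds as Hpi.
  set (b := PI / 2 - a).
  assert (Hb : 0 < b) by (unfold b; lra).
  assert (H1 : b < 2 * a * (ch - 1)) by (unfold b; lra).
  assert (H2 : b + 4 * a < 2 * a * (ch + 1)) by (unfold b in *; nra).
  assert (HS2 : b * (4 * a + b) <= 4 * a ^ 2 * S ^ 2).
  { replace (4 * a ^ 2 * S ^ 2) with ((2 * a * (ch - 1)) * (2 * a * (ch + 1))) by nra. nra. }
  set (Z := PI * v * S).
  assert (HZ0 : 0 <= Z) by (unfold Z; pose proof PI_RGT_0; apply Rmult_le_pos; [apply Rmult_le_pos|]; lra).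
  assert (HZ2 : 2 * b * (PI + 2 * a) * (b * (4 * a + b)) <= 4 * Z ^ 2 * a ^ 2).
  { replace (4 * Z ^ 2 * a ^ 2) with ((PI ^ 2 * v ^ 2) * (4 * a ^ 2 * S ^ 2)) by (unfold Z; ring).
    rewrite Hv2. replace (PI ^ 2 - 4 * a ^ 2) with (2 * b * (PI + 2 * a)) by (unfold b; field).
    apply Rmult_le_compat_l; [|exact HS2]. apply Rmult_le_pos; lra. }
  assert (HE : exp (- Z) * exp Z = 1) by (rewrite <- exp_plus; replace (-Z + Z) with 0 by ring; apply exp_0).
  pose proof (exp_pos (- Z)). pose proof (exp_pos Z).
  assert (suff : 1 <= exp Z * (1 - cos a) -> exp (- Z) <= 1 - cos a).
  { intros Hs. nra. }
  apply suff.
  destruct (Rle_dec a (3/4)) as [Hale|Hagt].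
  -
    assert (Hbb : 0.82 <= b) by (unfold b; lra).
    assert (HZa : 1.28 <= Z * a).
    { assert (Hp : PI * PI <= 2 * (PI + 2 * a) * (4 * a + b)) by (unfold b; nra).
      assert (Hp2 : b ^ 2 * (PI * PI) <= b ^ 2 * (2 * (PI + 2 * a) * (4 * a + b))) by (apply Rmult_le_compat_l; [nra|exact Hp]).
      assert ((PI * b / 2) ^ 2 <= (Z * a) ^ 2) by (simpl in *; nra).
      assert (1.28 <= PI * b / 2) by nra.
      assert (0 <= Z * a) by nra. nra. }
    destruct (cos_bound a 0) as [_ Hc]; [lra|lra|].
    unfold cos_approx, cos_term in Hc. simpl in Hc.
    assert (Hc' : a ^ 2 / 2 - a ^ 4 / 24 <= 1 - cos a) by (simpl; unfold Rdiv in *; lra).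
    pose proof (exp_T4 Z HZ0) as HT.
    assert (Ha2 : a ^ 2 <= 9/16) by nra.
    assert (Hq : 0.4765 * a ^ 2 <= a ^ 2 / 2 - a ^ 4 / 24).
    { assert (E4 : a ^ 4 = a^2 * a^2) by ring.
      assert (a^2 * a^2 <= 9/16 * a^2) by (apply Rmult_le_compat_r; [apply pow2_ge_0|exact Ha2]). rewrite E4. pose proof (pow2_ge_0 a). lra. }
    set (q := Z * a) in *.
    set (T := 1 + Z + Z^2/2 + Z^3/6 + Z^4/24) in *.
    assert (P1 : T * a ^ 4 = a^4 + q * a^3 + q^2/2 * a^2 + q^3/6 * a + q^4/24) by (unfold T, q; field).
    assert (P2 : a^4 + 1.28 * a^3 + 1.28^2/2 * a^2 + 1.28^3/6 * a + 1.28^4/24 <= T * a ^ 4).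
    { rewrite P1.
      assert (1.28 ^ 2 <= q ^ 2) by nra. assert (1.28 ^ 3 <= q ^ 3) by nra. assert (1.28 ^ 4 <= q ^ 4) by nra.
      assert (1.28 * a^3 <= q * a^3) by (apply Rmult_le_compat_r; nra).
      assert (1.28^2/2 * a^2 <= q^2/2 * a^2) by (apply Rmult_le_compat_r; nra).
      assert (1.28^3/6 * a <= q^3/6 * a) by (apply Rmult_le_compat_r; nra).
      lra. }
    assert (P3 : a^2 <= 0.4765 * (a^4 + 1.28 * a^3 + 1.28^2/2 * a^2 + 1.28^3/6 * a + 1.28^4/24)) by nra.
    assert (P4 : a^2 * 1 <= a ^ 2 * (T * (0.4765 * a ^ 2))).
    { replace (a ^ 2 * (T * (0.4765 * a ^ 2))) with (0.4765 * (T * a ^ 4)) by ring. nra. }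
    apply Rmult_le_reg_l in P4; [|nra].
    assert (T <= exp Z) by exact HT.
    assert (0 <= 0.4765 * a ^ 2) by nra.
    assert (T * (0.4765 * a ^ 2) <= exp Z * (a ^ 2 / 2 - a ^ 4 / 24)).
    { apply Rmult_le_compat; try nra. }
    assert (exp Z * (a ^ 2 / 2 - a ^ 4 / 24) <= exp Z * (1 - cos a)) by (apply Rmult_le_compat_l; lra).
    lra.
  -
    apply Rnot_le_lt in Hagt. assert (Hbb : b <= 0.825) by (unfold b; lra).
    assert (HZb : 8 * b ^ 2 <= Z ^ 2).
    { assert (Hp : 32 * a ^ 2 <= 2 * (PI + 2 * a) * (4 * a + b)) by (unfold b; nra).
      assert (Hp2 : b ^ 2 * (32 * a ^ 2) <= b ^ 2 * (2 * (PI + 2 * a) * (4 * a + b))) by (apply Rmult_le_compat_l; [apply pow2_ge_0|exact Hp]).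
      assert (Eq : 2 * b * (PI + 2 * a) * (b * (4 * a + b)) = b ^ 2 * (2 * (PI + 2 * a) * (4 * a + b))) by ring.
      assert (H32 : a^2 * (8 * b^2) <= a^2 * Z^2) by lra.
      apply Rmult_le_reg_l in H32; [lra|nra]. }
    assert (HZb' : 2.82 * b <= Z) by nra.
    assert (Hsb : sin b <= b) by (left; apply sin_lt_x; lra).
    assert (Hcb : cos a = sin b) by (unfold b; rewrite sin_shift; reflexivity).
    pose proof (exp_T2 Z HZ0).
    assert (1 <= (1 + Z + Z^2/2) * (1 - b)).
    { assert (1 + 2.82 * b + (2.82 * b)^2/2 <= 1 + Z + Z^2/2) by nra. nra. }
    rewrite Hcb. nra.
Qed.

Lemma key_lower x y : x <= 0 -> Rabs y < PI / 2 ->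
  cos (PI / 2 * Rabs (sin y)) <= Cmod (Cplus 1 (Cexp (PI * (sinh x * cos y), PI * (cosh x * sin y))))
  /\ Cmod (Cplus 1 (Cexp (PI * (sinh x * cos y), PI * (cosh x * sin y)))) <= 2.
Proof.
  intros Hx Hy.
  pose proof PI_bounds as Hpi.
  assert (Hy' : - (PI/2) < y < PI/2) by (apply Rabs_def2 in Hy; lra).
  assert (Hv : 0 < cos y) by (apply cos_gt_0; lra).
  set (u := Rabs (sin y)). set (v := cos y) in *.
  assert (Huv : u ^ 2 + v ^ 2 = 1).
  { unfold u, v. rewrite pow2_abs. pose proof (sin2_cos2 y). unfold Rsqr in *. simpl. lra. }
  assert (Hu0 : 0 <= u) by apply Rabs_pos.
  assert (Hu1 : u < 1) by nra.
  set (a := PI / 2 * u).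
  assert (Ha0 : 0 <= a) by (unfold a; nra).
  assert (Ha1 : a < PI / 2) by (unfold a; nra).
  destruct (hyp_facts x) as [Hcs [Hch Hsh]]. specialize (Hsh Hx).
  set (ch := cosh x) in *. set (S := - sinh x).
  assert (HS : 0 <= S) by (unfold S; lra).
  assert (Hcs' : ch ^ 2 - S ^ 2 = 1) by (unfold S; rewrite <- Hcs; ring).
  set (r := exp (PI * (sinh x * v))).
  assert (Hr : r = exp (- (PI * v * S))) by (unfold r, S; f_equal; ring).
  assert (Hr0 : 0 < r) by apply exp_pos.
  assert (Hr1 : r <= 1).
  { rewrite Hr. rewrite <- exp_0. apply exp_le_mono. pose proof PI_RGT_0.
    assert (0 <= PI * v * S) by (apply Rmult_le_pos; [apply Rmult_le_pos|]; lra). lra. }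
  set (Q := PI * (ch * sin y)).
  assert (HQ : cos Q = cos (2 * (a * ch))).
  { unfold Q, a, u. destruct (Rle_dec 0 (sin y)).
    - rewrite Rabs_pos_eq by lra. f_equal. field.
    - rewrite Rabs_left by lra. rewrite <- cos_neg. f_equal. field. }
  assert (HM : Cmod (Cplus 1 (Cexp (PI * (sinh x * v), Q))) = sqrt (1 + 2 * r * cos Q + r ^ 2)).
  { unfold Cmod, Cexp. fold r. simpl. f_equal. pose proof (sin2_cos2 Q) as HQ2. unfold Rsqr in *.
    assert (r*r*(sin Q * sin Q + cos Q * cos Q) = r*r) by (rewrite HQ2; ring). fold r. nra. }
  rewrite HM.
  assert (HcQ : -1 <= cos Q <= 1) by apply COS_bound.
  split.
  - assert (Hc0 : 0 <= cos a) by (apply cos_ge_0; lra).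
    rewrite <- (sqrt_pow2 (cos a)) by exact Hc0.
    apply sqrt_le_1_alt.
    pose proof (sin2_cos2 a) as Hsc. unfold Rsqr in Hsc.
    destruct (Rle_dec (a * ch) (PI / 4 + a / 2)) as [Hi|Hii].
    + assert (Hs0 : 0 <= sin a) by (apply sin_ge_0; lra).
      assert (Hcos : cos (PI / 2 + a) <= cos (2 * (a * ch))).
      { apply cos_decr_1; nra. }
      pose proof (sin_cos a) as Hsa.
      rewrite <- HQ in Hcos.
      assert (0 <= (r - sin a) ^ 2) by apply pow2_ge_0.
      assert (0 <= r * (cos Q + sin a)) by (apply Rmult_le_pos; lra).
      simpl in *. nra.
    + apply Rnot_le_lt in Hii.
      assert (Ha0' : 0 < a).
      { destruct (Req_dec a 0) as [E|E]; [|lra]. rewrite E in Hii. lra. }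
      assert (Hv2 : PI ^ 2 * v ^ 2 = PI ^ 2 - 4 * a ^ 2) by (unfold a; nra).
      pose proof (regime2 a ch S v (conj Ha0' Ha1) Hch HS Hcs' Hv Hv2 Hii) as Hreg.
      rewrite <- Hr in Hreg.
      nra.
  - apply Rle_trans with (sqrt (2 ^ 2)); [|rewrite sqrt_pow2; lra]. apply sqrt_le_1_alt. assert (r * cos Q <= r * 1) by (apply Rmult_le_compat_l; lra). assert (r * r <= 1 * 1) by (apply Rmult_le_compat; lra). simpl. lra.
Qed.


Lemma ln_le_mono x y : 0 < x -> x <= y -> ln x <= ln y.
Proof. intros Hx Hxy. destruct (Req_dec x y) as [->|]; [lra|]. left; apply ln_increasing; lra. Qed.

Lemma core (K a b c A B m : R) : 0 < K -> 0 < a -> 0 < b -> 0 < c <= 1 -> 0 < A ->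
  c <= B <= 2 -> 0 < m -> 4 * m ^ 2 = A * B ->
  K * Rpower (m ^ 2) (- (a + 1) / 2) * m <=
  (Rpower 2 (Rmax a b) * K / Rpower c ((Rmax a b - Rmin a b) / 2)) /
  (Rpower A (a / 2) * Rpower B (b / 2)).
Proof.
  intros HK Ha Hb Hc HA HB Hm Hmab.
  assert (HB0 : 0 < B) by lra.
  set (la := ln A). set (lb := ln B). set (lc := ln c). set (l2 := ln 2). set (lm := ln m).
  assert (Hlm : ln (m ^ 2) = 2 * lm) by (unfold lm; simpl; rewrite Rmult_1_r, ln_mult by lra; ring).
  assert (H4 : ln 4 = 2 * l2) by (unfold l2; replace 4 with (2 * 2) by ring; rewrite ln_mult by lra; ring).
  assert (Hrel : 2 * l2 + 2 * lm = la + lb).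
  { rewrite <- H4, <- Hlm. unfold la, lb. rewrite <- !ln_mult by (try apply pow_lt; lra). rewrite Hmab. reflexivity. }
  assert (Hcb : lc <= lb) by (apply ln_le_mono; lra).
  assert (Hb2 : lb <= l2) by (apply ln_le_mono; lra).
  assert (Hc1 : lc <= 0) by (rewrite <- ln_1; apply ln_le_mono; lra).
  assert (Hl2 : 0 < l2) by (rewrite <- ln_1; apply ln_increasing; lra).
  set (nu := Rmax a b). set (mu := Rmin a b).
  assert (LHS : K * Rpower (m ^ 2) (- (a + 1) / 2) * m = K * exp (- a * lm)).
  { unfold Rpower. rewrite Hlm. rewrite <- (exp_ln m) by lra. fold lm.
    rewrite Rmult_assoc, <- exp_plus. f_equal. f_equal. field. }
  assert (RHS : (Rpower 2 nu * K / Rpower c ((nu - mu) / 2)) / (Rpower A (a / 2) * Rpower B (b / 2))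
     = K * exp (nu * l2 - (nu - mu) / 2 * lc - a / 2 * la - b / 2 * lb)).
  { unfold Rpower. fold la lb lc l2.
    replace (nu * l2 - (nu - mu) / 2 * lc - a / 2 * la - b / 2 * lb) with
      (nu * l2 + - ((nu - mu) / 2 * lc) + - (a / 2 * la) + - (b / 2 * lb)) by ring.
    rewrite !exp_plus, !exp_Ropp.
    pose proof (exp_pos (nu * l2)). pose proof (exp_pos ((nu - mu) / 2 * lc)).
    pose proof (exp_pos (a / 2 * la)). pose proof (exp_pos (b / 2 * lb)).
    field. repeat split; lra. }
  rewrite LHS, RHS. apply Rmult_le_compat_l; [lra|]. apply exp_le_mono.
  assert (E : - a * lm = - a / 2 * (la + lb) + a * l2) by (rewrite <- Hrel; field).
  rewrite E.
  unfold nu, mu. destruct (Rle_dec a b) as [Hab|Hab].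
  - rewrite Rmax_right, Rmin_left by lra.
    assert (0 <= (b - a) * (2 * l2 - lc - lb)) by (apply Rmult_le_pos; lra). nra.
  - rewrite Rmax_left, Rmin_right by lra.
    assert (0 <= (a - b) * (lb - lc)) by (apply Rmult_le_pos; lra). nra.
Qed.


Definition wz (z : C) : C := (RtoC (PI / 2) * Csinh z)%C.

Lemma PI_sinh_B z : (RtoC PI * Csinh z = wz z + wz z)%C.
Proof. unfold wz. destruct (Csinh z) as [p q]. apply injective_projections; simpl; field. Qed.

Lemma PI_sinh_A z : (RtoC (- PI) * Csinh z = - (wz z + wz z))%C.
Proof. unfold wz. destruct (Csinh z) as [p q]. apply injective_projections; simpl; field. Qed.

Lemma B_comp x y : Cmod (1 + Cexp (RtoC PI * Csinh (x, y)))%C =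
  Cmod (Cplus 1 (Cexp (PI * (sinh x * cos y), PI * (cosh x * sin y)))).
Proof.
  rewrite Csinh_comp. f_equal. f_equal. f_equal. apply injective_projections; simpl; ring.
Qed.

Lemma A_comp x y : Cmod (1 + Cexp (RtoC (- PI) * Csinh (x, y)))%C =
  Cmod (Cplus 1 (Cexp (PI * (sinh (- x) * cos (- y)), PI * (cosh (- x) * sin (- y))))).
Proof.
  rewrite Csinh_comp. f_equal. f_equal. f_equal.
  unfold sinh, cosh. rewrite cos_neg, sin_neg, Ropp_involutive.
  apply injective_projections; simpl; field.
Qed.

Lemma psi_sq z : Cmod (1 + psi z * psi z)%C = Cmod (Ccosh (wz z)) ^ 2.
Proof. unfold psi. fold (wz z). rewrite Csinh_sq, Cmod_mult. ring. Qed.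

Lemma dpsi_mod z : Cmod (dpsi z) = PI / 2 * Cmod (Ccosh z) * Cmod (Ccosh (wz z)).
Proof.
  unfold dpsi. fold (wz z). rewrite !Cmod_mult, Cmod_R, Rabs_pos_eq; [ring|].
  pose proof PI_RGT_0; lra.
Qed.

Lemma AB_rel z : 4 * Cmod (Ccosh (wz z)) ^ 2 =
  Cmod (1 + Cexp (RtoC (- PI) * Csinh z))%C * Cmod (1 + Cexp (RtoC PI * Csinh z))%C.
Proof. rewrite PI_sinh_A, PI_sinh_B. apply cosh_AB. Qed.

Lemma A_pos_of_B z : 0 < Cmod (1 + Cexp (RtoC PI * Csinh z))%C ->
  0 < Cmod (1 + Cexp (RtoC (- PI) * Csinh z))%C.
Proof.
  intros H. rewrite PI_sinh_A, Cexp_1plus_opp, <- PI_sinh_B.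
  apply Rmult_lt_0_compat; auto. apply exp_pos.
Qed.

Lemma B_pos_of_A z : 0 < Cmod (1 + Cexp (RtoC (- PI) * Csinh z))%C ->
  0 < Cmod (1 + Cexp (RtoC PI * Csinh z))%C.
Proof.
  intros H. rewrite PI_sinh_B.
  replace (wz z + wz z)%C with (- (- (wz z + wz z)))%C by ring.
  rewrite Cexp_1plus_opp, <- PI_sinh_A.
  apply Rmult_lt_0_compat; auto. apply exp_pos.
Qed.

Lemma pointwise (K a b c0 : R) (f : C -> C) (z : C) :
  0 < K -> 0 < a -> 0 < b -> 0 < c0 <= 1 ->
  0 < Cmod (1 + Cexp (RtoC (- PI) * Csinh z))%C ->
  c0 <= Cmod (1 + Cexp (RtoC PI * Csinh z))%C <= 2 ->
  Cmod (f (psi z)) <= K * Rpower (Cmod (1 + psi z * psi z)%C) (- (a + 1) / 2) ->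
  Cmod (f (psi z) * dpsi z)%C <=
    PI / 2 * (Rpower 2 (Rmax a b) * K / Rpower c0 ((Rmax a b - Rmin a b) / 2)) * Cmod (Ccosh z) /
    (Rpower (Cmod (1 + Cexp (RtoC (- PI) * Csinh z))%C) (a / 2) *
     Rpower (Cmod (1 + Cexp (RtoC PI * Csinh z))%C) (b / 2)).
Proof.
  intros HK Ha Hb Hc HA HB Hf.
  set (A := Cmod (1 + Cexp (RtoC (- PI) * Csinh z))%C) in *.
  set (B := Cmod (1 + Cexp (RtoC PI * Csinh z))%C) in *.
  pose proof (AB_rel z) as Hrel. fold A B in Hrel.
  set (m := Cmod (Ccosh (wz z))) in *.
  assert (Hm0 : 0 <= m) by apply Cmod_ge_0.
  assert (Hm : 0 < m).
  { destruct (Req_dec m 0) as [E|E]; [|lra]. rewrite E in Hrel.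
    assert (0 < A * B) by (apply Rmult_lt_0_compat; lra). simpl in Hrel. lra. }
  rewrite psi_sq in Hf. fold m in Hf.
  rewrite Cmod_mult, dpsi_mod. fold m.
  pose proof (core K a b c0 A B m HK Ha Hb Hc HA HB Hm Hrel) as Hcore.
  pose proof PI_RGT_0.
  assert (Hch : 0 <= Cmod (Ccosh z)) by apply Cmod_ge_0.
  assert (HPA : 0 < Rpower A (a / 2)) by (unfold Rpower; apply exp_pos).
  assert (HPB : 0 < Rpower B (b / 2)) by (unfold Rpower; apply exp_pos).
  assert (Hdp : 0 <= PI / 2 * Cmod (Ccosh z) * m) by (apply Rmult_le_pos; [apply Rmult_le_pos|]; lra).
  apply Rle_trans with ((K * Rpower (m ^ 2) (- (a + 1) / 2)) * (PI / 2 * Cmod (Ccosh z) * m)).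
  { apply Rmult_le_compat_r; auto. }
  apply Rle_trans with ((PI / 2 * Cmod (Ccosh z)) *
     ((Rpower 2 (Rmax a b) * K / Rpower c0 ((Rmax a b - Rmin a b) / 2)) / (Rpower A (a / 2) * Rpower B (b / 2)))).
  { replace ((K * Rpower (m ^ 2) (- (a + 1) / 2)) * (PI / 2 * Cmod (Ccosh z) * m)) with
      ((PI / 2 * Cmod (Ccosh z)) * (K * Rpower (m ^ 2) (- (a + 1) / 2) * m)) by ring.
    apply Rmult_le_compat_l; [apply Rmult_le_pos; lra|exact Hcore]. }
  assert (HPC : 0 < Rpower c0 ((Rmax a b - Rmin a b) / 2)) by (unfold Rpower; apply exp_pos).
  right. unfold Rdiv. field. repeat split; lra.
Qed.

Lemma Csinh_neg z : Csinh (- z) = (- Csinh z)%C.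
Proof. unfold Csinh. replace (- - z)%C with z by ring. field. Qed.

Lemma Ccosh_neg z : Ccosh (- z) = Ccosh z.
Proof. unfold Ccosh. replace (- - z)%C with z by ring. field. Qed.

Lemma psi_neg z : psi (- z) = (- psi z)%C.
Proof. unfold psi. rewrite Csinh_neg. replace (RtoC (PI / 2) * - Csinh z)%C with (- (RtoC (PI / 2) * Csinh z))%C by ring. apply Csinh_neg. Qed.

Lemma dpsi_neg z : dpsi (- z) = dpsi z.
Proof. unfold dpsi. rewrite Csinh_neg, Ccosh_neg.
  replace (RtoC (PI / 2) * - Csinh z)%C with (- (RtoC (PI / 2) * Csinh z))%C by ring. rewrite Ccosh_neg. reflexivity. Qed.

Lemma neg_PI_sinh z : (RtoC (- PI) * Csinh (- z) = RtoC PI * Csinh z)%C.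
Proof. rewrite Csinh_neg. apply injective_projections; simpl; ring. Qed.

Lemma pos_PI_sinh z : (RtoC PI * Csinh (- z) = RtoC (- PI) * Csinh z)%C.
Proof. rewrite Csinh_neg. apply injective_projections; simpl; ring. Qed.

Lemma pointwise_pos (K a b c0 : R) (f : C -> C) (z : C) :
  0 < K -> 0 < a -> 0 < b -> 0 < c0 <= 1 ->
  0 < Cmod (1 + Cexp (RtoC PI * Csinh z))%C ->
  c0 <= Cmod (1 + Cexp (RtoC (- PI) * Csinh z))%C <= 2 ->
  Cmod (f (psi z)) <= K * Rpower (Cmod (1 + psi z * psi z)%C) (- (b + 1) / 2) ->
  Cmod (f (psi z) * dpsi z)%C <=
    PI / 2 * (Rpower 2 (Rmax a b) * K / Rpower c0 ((Rmax a b - Rmin a b) / 2)) * Cmod (Ccosh z) /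
    (Rpower (Cmod (1 + Cexp (RtoC (- PI) * Csinh z))%C) (a / 2) *
     Rpower (Cmod (1 + Cexp (RtoC PI * Csinh z))%C) (b / 2)).
Proof.
  intros HK Ha Hb Hc HA HB Hf.
  pose proof (pointwise K b a c0 (fun u => f (- u)%C) (- z)%C HK Hb Ha Hc) as P.
  rewrite !neg_PI_sinh, !pos_PI_sinh, psi_neg, dpsi_neg, Ccosh_neg in P.
  replace (- - psi z)%C with (psi z) in P by ring.
  replace (- psi z * - psi z)%C with (psi z * psi z)%C in P by ring.
  rewrite (Rmax_comm b a), (Rmin_comm b a) in P.
  eapply Rle_trans. apply P; auto. right. f_equal. apply Rmult_comm.
Qed.

Lemma abs_sin_le d y : 0 < d < PI / 2 -> Rabs y < d -> Rabs (sin y) <= sin d.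
Proof.
  intros Hd Hy. apply Rabs_def2 in Hy.
  destruct (Rle_dec 0 y).
  - rewrite Rabs_pos_eq by (apply sin_ge_0; lra). apply sin_incr_1; lra.
  - rewrite Rabs_left1 by (rewrite <- (Ropp_involutive y), sin_neg; assert (0 <= sin (- y)) by (apply sin_ge_0; lra); lra).
    rewrite <- sin_neg. apply sin_incr_1; lra.
Qed.

Lemma c0_facts d y : 0 < d < PI / 2 -> Rabs y < d ->
  0 < cos (PI / 2 * sin d) <= 1 /\ cos (PI / 2 * sin d) <= cos (PI / 2 * Rabs (sin y)).
Proof.
  intros Hd Hy. pose proof PI_RGT_0.
  assert (Hs1 : sin d < 1) by (rewrite <- sin_PI2; apply sin_increasing_1; lra).
  assert (Hs0 : 0 <= sin d) by (apply sin_ge_0; lra).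
  pose proof (abs_sin_le d y Hd Hy). pose proof (Rabs_pos (sin y)).
  split; [split|].
  - apply cos_gt_0; nra.
  - apply COS_bound.
  - apply cos_decr_1; nra.
Qed.

Lemma real_B k x : Cmod (1 + Cexp (RtoC k * Csinh (RtoC x)))%C = 1 + exp (k * sinh x).
Proof.
  unfold RtoC. rewrite Csinh_comp, cos_0, sin_0.
  pose proof (exp_pos (k * sinh x)).
  unfold Cmod, Cexp. simpl.
  transitivity (sqrt ((1 + exp (k * sinh x)) ^ 2)); [|apply sqrt_pow2; lra].
  f_equal. replace (k * (sinh x * 1) - 0 * (cosh x * 0)) with (k * sinh x) by ring.
  replace (k * (cosh x * 0) + 0 * (sinh x * 1)) with 0 by ring.
  rewrite cos_0, sin_0. ring.
Qed.

Lemma real_cosh x : Cmod (Ccosh (RtoC x)) = cosh x.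
Proof.
  unfold RtoC. rewrite Ccosh_comp, cos_0, sin_0.
  destruct (hyp_facts x) as [_ [H _]].
  unfold Cmod. simpl.
  transitivity (sqrt (cosh x ^ 2)); [|apply sqrt_pow2; lra].
  f_equal. ring.
Qed.


Lemma Rpower_1_base y : Rpower 1 y = 1.
Proof. unfold Rpower. rewrite ln_1, Rmult_0_r. apply exp_0. Qed.


Lemma sinh_neg' x : sinh (- x) = - sinh x.
Proof. unfold sinh. rewrite Ropp_involutive. field. Qed.

Theorem lemma9 (d K alpha beta : R) (f : C -> C) :
  0 < d < PI / 2 -> 0 < K -> 0 < alpha -> 0 < beta ->
  (* f analytic on psi(D_d) *)
  analytic_on (fun z => exists t, strip d t /\ z = psi t) f ->
  (* bound on psi(D_d^-) *)
  (forall t : C, strip d t -> Re t < 0 ->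
     Cmod (f (psi t)) <=
       K * Rpower (Cmod (1 + psi t * psi t)%C) (- (alpha + 1) / 2)) ->
  (* bound on psi(D_d^+) *)
  (forall t : C, strip d t -> 0 <= Re t ->
     Cmod (f (psi t)) <=
       K * Rpower (Cmod (1 + psi t * psi t)%C) (- (beta + 1) / 2)) ->
  let mu := Rmin alpha beta in
  let nu := Rmax alpha beta in
  LDE (Rpower 2 nu * K / Rpower (cos (PI / 2 * sin d)) ((nu - mu) / 2))
      (Rpower 2 nu * K) alpha beta d
      (fun t => (f (psi t) * dpsi t)%C).
Proof.
  intros Hd HK Ha Hb Hf Hneg Hpos mu nu.
  pose proof PI_RGT_0 as Hpi0.
  split; [apply analytic_F; auto|split].
  - intros z Hz. destruct z as [x y]. unfold strip in Hz. simpl in Hz.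
    destruct (c0_facts d y Hd Hz) as [Hc0 Hcy].
    assert (Hy2 : Rabs y < PI / 2) by lra.
    unfold mu, nu.
    destruct (Rlt_dec x 0) as [Hx|Hx].
    + destruct (key_lower x y ltac:(lra) Hy2) as [Hlow Hup].
      rewrite <- B_comp in Hlow, Hup.
      apply (pointwise K alpha beta (cos (PI / 2 * sin d)) f (x, y) HK Ha Hb Hc0).
      * apply A_pos_of_B. lra.
      * lra.
      * apply Hneg; [exact Hz | simpl; lra].
    + apply Rnot_lt_le in Hx.
      assert (Hy2' : Rabs (- y) < PI / 2) by (rewrite Rabs_Ropp; lra).
      destruct (key_lower (- x) (- y) ltac:(lra) Hy2') as [Hlow Hup].
      rewrite <- A_comp in Hlow, Hup.
      rewrite sin_neg, Rabs_Ropp in Hlow.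
      apply (pointwise_pos K alpha beta (cos (PI / 2 * sin d)) f (x, y) HK Ha Hb Hc0).
      * apply B_pos_of_A. lra.
      * lra.
      * apply Hpos; [exact Hz | simpl; lra].
  - intros x. unfold mu, nu.
    assert (Hc1 : 0 < 1 <= 1) by lra.
    assert (Hz : strip d (RtoC x)) by (unfold strip; simpl; rewrite Rabs_R0; lra).
    destruct (Rlt_dec x 0) as [Hx|Hx].
    + destruct (hyp_facts x) as [_ [_ Hsh]]. specialize (Hsh ltac:(lra)).
      assert (He : exp (PI * sinh x) <= 1).
      { rewrite <- exp_0. apply exp_le_mono. nra. }
      pose proof (exp_pos (PI * sinh x)). pose proof (exp_pos (- PI * sinh x)).
      eapply Rle_trans.
      { apply (pointwise K alpha beta 1 f (RtoC x) HK Ha Hb Hc1).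
        - rewrite real_B. lra.
        - rewrite real_B. lra.
        - apply Hneg; [exact Hz | simpl; lra]. }
      rewrite !real_B, real_cosh, Rpower_1_base. right. field.
      split; unfold Rpower; apply Rgt_not_eq, exp_pos.
    + apply Rnot_lt_le in Hx.
      destruct (hyp_facts (- x)) as [_ [_ Hsh]]. specialize (Hsh ltac:(lra)).
      rewrite sinh_neg' in Hsh.
      assert (He : exp (- PI * sinh x) <= 1).
      { rewrite <- exp_0. apply exp_le_mono. nra. }
      pose proof (exp_pos (PI * sinh x)). pose proof (exp_pos (- PI * sinh x)).
      eapply Rle_trans.
      { apply (pointwise_pos K alpha beta 1 f (RtoC x) HK Ha Hb Hc1).
        - rewrite real_B. lra.
        - rewrite real_B. lra.
        - apply Hpos; [exact Hz | simpl; lra]. }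
      rewrite !real_B, real_cosh, Rpower_1_base. right. field.
      split; unfold Rpower; apply Rgt_not_eq, exp_pos.
Qed.
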